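(* There exists a countable family $\mathcal{F}=\{f_n : n\in\omega\}$ of continuous functions $f_n\colon 2^\omega\to 2^\omega$ such that every maximal square covered by $\mathcal{F}$ is uncountable; that is, whenever $S\subseteq 2^\omega$ is maximal with respect to inclusion among subsets of $2^\omega$ such that $S\times S$ is covered by $\mathcal{F}$, the set $S$ is uncountable.
   Context: $2^\omega$ denotes the Cantor set, i.e. the space of all functions $\omega\to\{0,1\}$ with the product topology. A set $M\subseteq 2^\omega\times 2^\omega$ is said to be covered by a family of functions $\mathcal{F}$ if for every $(x,y)\in M$ there is $f\in\mathcal{F}$ such that either $y=f(x)$ or $x=f(y)$. *)

(* Defs.v *)
From HB Require Import structures.
From mathcomp Require Import all_boot all_order all_algebra.
From mathcomp Require Import all_classical all_reals all_analysis.
Set Implicit Arguments. Unset Strict Implicit. Unset Printing Implicit Defensive.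
Local Open Scope classical_set_scope.

Definition covered_by (F : nat -> cantor_space -> cantor_space)
  (M : set (cantor_space * cantor_space)) : Prop :=
  forall p, M p -> exists n, p.2 = F n p.1 \/ p.1 = F n p.2.

Definition maximal_covered_square (F : nat -> cantor_space -> cantor_space)
  (S : set cantor_space) : Prop :=
  covered_by F (S `*` S) /\
  forall T : set cantor_space, S `<=` T -> covered_by F (T `*` T) -> T = S.

(* Main.v *)
Require Import Defs.
From HB Require Import structures.
From mathcomp Require Import all_boot all_order all_algebra.
From mathcomp Require Import all_classical all_reals all_analysis.
Local Open Scope classical_set_scope.
Lemma reindex_continuous (c : nat -> nat) :
  continuous (fun x : cantor_space => ((fun m => x (c m)) : cantor_space)).
Proof.
move=> x.
apply/cvg_sup => i.
apply/cvg_image.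
  rewrite eqEsubset; split => // b _; exists (fun _ => b) => //.
move=> B /= nB.
have := @proj_continuous nat (fun _ => discrete_topology bool) (c i) x.
move=> h.
exists ((fun f : cantor_space => f i) @^-1` B).
  have := h B nB. by [].
by rewrite image_preimage //; rewrite eqEsubset; split => // b _; exists (fun _ => b).
Qed.

Definition Fam (n : nat) (x : cantor_space) : cantor_space :=
  match n with
  | 0 => x
  | k.+1 => fun m => x (pickle (k, m)).*2
  end.

Definition code (t : nat -> cantor_space) : cantor_space := fun n =>
  if odd n then ~~ t n./2 n
  else match unpickle n./2 with Some (k, m) => t k m | None => false end.

Lemma code_proj t k : Fam k.+1 (code t) = t k.
Proof.
apply: funext => m /=; rewrite /code odd_double doubleK.
by rewrite (pickleK (k, m)).
Qed.

Lemma code_new t j : code t <> t j.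
Proof.
move=> /(congr1 (fun f => f j.*2.+1)); rewrite /code /= odd_double /=.
rewrite uphalf_double.
by case: (t j _).
Qed.

Theorem theorem2p1 :
  exists F : nat -> cantor_space -> cantor_space,
    (forall n, continuous (F n)) /\
    forall S : set cantor_space, maximal_covered_square F S -> ~ countable S.
Proof.
exists Fam; split.
  case=> [|k] /=; first by move=> x; exact: cvg_id.
  exact: (reindex_continuous (fun m => (pickle (k, m)).*2)).
move=> S [covS maxS] /pcard_surjP [t tsurj].
pose x := code t.
have xS : ~ S x.
  by move=> /tsurj [j _ /esym]; apply: code_new.
have T_cov : Defs.covered_by Fam ((S `|` [set x]) `*` (S `|` [set x])).
  case=> a b [/= Ha Hb]; case: Ha => [Sa|->]; case: Hb => [Sb|->].
  - exact: (covS (a, b)).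
  - have [k _ <-] := tsurj a Sa.
    by exists k.+1; right; rewrite /x -(code_proj t k).
  - have [k _ <-] := tsurj b Sb.
    by exists k.+1; left; rewrite /x -(code_proj t k).
  - by exists 0; left.
have := maxS _ (@subsetUl _ S [set x]) T_cov.
move=> eq; apply: xS; rewrite -eq; by right.
Qed.
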